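(* Let $d\ge1$ and $P\subseteq\mathbb R\times[d]$. The convexity space $(P,\mathcal C_{\equiv}(P))$ admits the colorful fractional Helly theorem for colorful $2$-tuples.
   Context: $[d]=\{1,\dots,d\}$. A (separated) $d$-interval is a set $I=\bigcup_{i\in[d]}\{(x,i): x\in I^{(i)}\}\subseteq\mathbb R\times[d]$ with each $I^{(i)}\subseteq\mathbb R$ convex (possibly empty). For $P\subseteq\mathbb R\times[d]$, $\mathcal C_{\equiv}(P)=\{I\cap P: I \text{ a } d\text{-interval}\}$. A convexity space $(X,\mathcal C)$ admits a colorful fractional Helly theorem for colorful $k$-tuples if there is a function $\beta:(0,1)\to(0,1)$ such that for all finite $\mathcal F_1,\dots,\mathcal F_k\subseteq\mathcal C$ of sizes $n_1,\dots,n_k$ with at least $\alpha n_1\cdots n_k$ colorful $k$-tuples $(C_1,\dots,C_k)\in\mathcal F_1\times\dots\times\mathcal F_k$ having nonempty intersection, some $\mathcal F_i$ contains a subfamily of size at least $\beta(\alpha)|\mathcal F_i|$ with nonempty intersection. *)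

(* Defs.v *)
From HB Require Import structures.
From mathcomp Require Import all_boot all_order all_algebra.
From mathcomp Require Import boolp classical_sets reals.
Set Implicit Arguments. Unset Strict Implicit. Unset Printing Implicit Defensive.
Import Order.TTheory GRing.Theory Num.Theory.
Local Open Scope ring_scope.
Local Open Scope classical_set_scope.

Definition convexR (R : realType) (A : set R) : Prop :=
  forall x y z, A x -> A z -> x <= y -> y <= z -> A y.

Definition d_interval_set (R : realType) (d : nat) (I : 'I_d -> set R)
  : set (R * 'I_d) := [set p | I p.2 p.1].

Definition is_d_interval (R : realType) (d : nat) (J : set (R * 'I_d)) : Prop :=
  exists I : 'I_d -> set R, (forall i, convexR (I i)) /\ J = d_interval_set I.

Definition C_equiv (R : realType) (d : nat) (P : set (R * 'I_d))
  : set (set (R * 'I_d)) :=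
  [set J | exists I, is_d_interval I /\ J = I `&` P].

(* Colorful fractional Helly for colorful 2-tuples, for a convexity space
   whose convex sets are C (subsets of the ground set).  A finite family of
   size n is an injective map 'I_n -> C. *)
Definition colorful_frac_helly2 (R : realType) (X : Type) (C : set (set X)) : Prop :=
  exists beta : R -> R,
    (forall a, 0 < a < 1 -> 0 < beta a < 1) /\
    forall a : R, 0 < a < 1 ->
    forall (n1 n2 : nat) (F1 : 'I_n1 -> set X) (F2 : 'I_n2 -> set X),
      (0 < n1)%N -> (0 < n2)%N ->
      injective F1 -> injective F2 ->
      (forall i, C (F1 i)) -> (forall j, C (F2 j)) ->
      (exists S : {set 'I_n1 * 'I_n2},
          a * n1%:R * n2%:R <= #|S|%:R /\
          forall p, p \in S -> exists x, F1 p.1 x /\ F2 p.2 x) ->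
      (exists S : {set 'I_n1},
          beta a * n1%:R <= #|S|%:R /\ exists x, forall i, i \in S -> F1 i x)
      \/
      (exists S : {set 'I_n2},
          beta a * n2%:R <= #|S|%:R /\ exists x, forall i, i \in S -> F2 i x).

(* Main.v *)
Require Import Defs.
From HB Require Import structures.
From mathcomp Require Import all_boot all_order all_algebra.
From mathcomp Require Import boolp classical_sets reals.
From mathcomp Require Import ring lra.
Set Implicit Arguments. Unset Strict Implicit. Unset Printing Implicit Defensive.
Import Order.TTheory GRing.Theory Num.Theory.
Local Open Scope ring_scope.

Lemma choiceE X Y (P : X -> Y -> Prop) :
  (forall x, exists y, P x y) -> exists f, forall x, P x (f x).
Proof. by move=> /choice [f hf]; exists f. Qed.

Lemma exists_min (R : realType) (T : finType) (K : {set T}) (f : T -> R) :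
  K != finset.set0 -> exists2 t, t \in K & forall u, u \in K -> f t <= f u.
Proof.
case/set0Pn => t0 Kt0.
case: (arg_minP f Kt0) => t tK tmin.
by exists t.
Qed.

Lemma sum_asbool_card (R : realType) (n : nat) (Q : 'I_n -> Prop) :
  \sum_(j < n) ((`[< Q j >] : nat)%:R : R) = #|[set j | `[< Q j >]]|%:R.
Proof.
rewrite -sum1_card natr_sum [in RHS]big_mkcond /=; apply: eq_bigr => j _.
by rewrite inE; case: `[< Q j >].
Qed.

Theorem lemma3 (R : realType) (d : nat) (P : set (R * 'I_d)) :
  (1 <= d)%N -> colorful_frac_helly2 R (C_equiv P).
Proof.
move=> d1.
have d0 : (0 < d%:R :> R) by rewrite ltr0n.
exists (fun a => a / (4 * d%:R)).
split.
  move=> a /andP[a0 a1]; apply/andP; split.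
    by apply: divr_gt0 => //; rewrite mulr_gt0.
  have d1' : (1 <= d%:R :> R) by rewrite ler1n.
  rewrite ltr_pdivrMr ?mulr_gt0 //; lra.
move=> a /andP[a0 a1] n1 n2 F1 F2 n10 n20 _ _ C1 C2 [S [HS Hw]].
set beta := a / (4 * d%:R).
have [h1|h1] := pselect (exists S : {set 'I_n1},
          beta * n1%:R <= #|S|%:R /\ exists x, forall i, i \in S -> F1 i x).
  by left.
right; apply: contrapT => h2.
have B1 : forall y, #|[set i | `[< F1 i y >]]|%:R <= beta * n1%:R.
  move=> y; rewrite leNgt; apply/negP => lt; apply: h1.
  exists [set i | `[< F1 i y >]]; split; first exact: ltW.
  by exists y => i; rewrite inE => /asboolP.
have B2 : forall y, #|[set i | `[< F2 i y >]]|%:R <= beta * n2%:R.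
  move=> y; rewrite leNgt; apply/negP => lt; apply: h2.
  exists [set i | `[< F2 i y >]]; split; first exact: ltW.
  by exists y => i; rewrite inE => /asboolP.
pose x0 : R * 'I_d := (0, Ordinal d1).
have [w Hw'] : exists w : 'I_n1 * 'I_n2 -> R * 'I_d,
    forall p, p \in S -> F1 p.1 (w p) /\ F2 p.2 (w p).
  apply: (@choiceE _ _ (fun (p : 'I_n1 * 'I_n2) (x : R * 'I_d) => p \in S -> F1 p.1 x /\ F2 p.2 x)) => p.
  have [pS|pS] := boolP (p \in S).
    by case: (Hw p pS) => x hx; exists x.
  by exists x0.
have D : forall (n : nat) (F : 'I_n -> set (R * 'I_d)), (forall i, C_equiv P (F i)) ->
   exists J : 'I_n -> 'I_d -> set R, forall i, (forall c, convexR (J i c)) /\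
     forall x, F i x <-> J i x.2 x.1 /\ P x.
  move=> n F CF.
  apply: (@choiceE _ _ (fun (i : 'I_n) (J : 'I_d -> set R) => (forall c, convexR (J c)) /\
     forall x, F i x <-> J x.2 x.1 /\ P x)) => i.
  case: (CF i) => I [[J [cJ ->]] ->].
  by exists J; split.
case: (D _ F1 C1) => J1 HJ1.
case: (D _ F2 C2) => J2 HJ2.
have [l1 Hl1] : exists l1 : 'I_n1 * 'I_d -> R * 'I_d, forall ic p,
   p \in S -> p.1 = ic.1 -> (w p).2 = ic.2 ->
   F1 ic.1 (l1 ic) /\ (l1 ic).2 = ic.2 /\ (l1 ic).1 <= (w p).1.
  apply: (@choiceE _ _ (fun (ic : 'I_n1 * 'I_d) (a : R * 'I_d) => forall p,
   p \in S -> p.1 = ic.1 -> (w p).2 = ic.2 ->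
   F1 ic.1 a /\ a.2 = ic.2 /\ a.1 <= (w p).1)) => [[i c]] /=.
  pose K := [set p in S | (p.1 == i) && ((w p).2 == c)].
  have [K0|K0] := eqVneq K finset.set0.
    exists x0 => p pS pi pc; suff : p \in K by rewrite K0 inE.
    by rewrite inE pS pi pc !eqxx.
  case: (exists_min (fun p => (w p).1) K0) => t.
  rewrite inE => /andP[tS /andP[/eqP ti /eqP tc]] tmin.
  exists (w t) => p pS pi pc; split; first by rewrite -ti; case: (Hw' t tS).
  split => //; apply: tmin; by rewrite inE pS pi pc !eqxx.
have [l2 Hl2] : exists l2 : 'I_n2 * 'I_d -> R * 'I_d, forall jc p,
   p \in S -> p.2 = jc.1 -> (w p).2 = jc.2 ->
   F2 jc.1 (l2 jc) /\ (l2 jc).2 = jc.2 /\ (l2 jc).1 <= (w p).1.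
  apply: (@choiceE _ _ (fun (jc : 'I_n2 * 'I_d) (a : R * 'I_d) => forall p,
   p \in S -> p.2 = jc.1 -> (w p).2 = jc.2 ->
   F2 jc.1 a /\ a.2 = jc.2 /\ a.1 <= (w p).1)) => [[j c]] /=.
  pose K := [set p in S | (p.2 == j) && ((w p).2 == c)].
  have [K0|K0] := eqVneq K finset.set0.
    exists x0 => p pS pj pc; suff : p \in K by rewrite K0 inE.
    by rewrite inE pS pj pc !eqxx.
  case: (exists_min (fun p => (w p).1) K0) => t.
  rewrite inE => /andP[tS /andP[/eqP tj /eqP tc]] tmin.
  exists (w t) => p pS pj pc; split; first by rewrite -tj; case: (Hw' t tS).
  split => //; apply: tmin; by rewrite inE pS pj pc !eqxx.
have key : forall p, p \in S -> exists c,
    F2 p.2 (l1 (p.1, c)) \/ F1 p.1 (l2 (p.2, c)).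
  move=> p pS; exists (w p).2.
  case: (Hl1 (p.1, (w p).2) p pS erefl erefl) => /= Fa [a2 ax].
  case: (Hl2 (p.2, (w p).2) p pS erefl erefl) => /= Fb [b2 bx].
  case: (Hw' p pS) => Fx1 Fx2.
  set A := l1 _ in Fa a2 ax *; set B := l2 _ in Fb b2 bx *.
  have [ba|ab] := leP B.1 A.1.
    left; apply/(proj2 (HJ2 p.2)); split; last by case: (proj2 (HJ1 p.1) A).1.
    rewrite a2; apply: ((proj1 (HJ2 p.2)) (w p).2 B.1 A.1 (w p).1) => //.
      by rewrite -b2; case: (proj2 (HJ2 p.2) B).1.
    by case: (proj2 (HJ2 p.2) (w p)).1.
  right; apply/(proj2 (HJ1 p.1)); split; last by case: (proj2 (HJ2 p.2) B).1.
  rewrite b2; apply: ((proj1 (HJ1 p.1)) (w p).2 A.1 B.1 (w p).1) => //.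
      by rewrite -a2; case: (proj2 (HJ1 p.1) A).1.
    by case: (proj2 (HJ1 p.1) (w p)).1.
  exact: ltW ab.
pose G (p : 'I_n1 * 'I_n2) : R := \sum_(c < d)
   (((`[< F2 p.2 (l1 (p.1, c)) >] : nat)%:R) + ((`[< F1 p.1 (l2 (p.2, c)) >] : nat)%:R)).
have G0 : forall p, 0 <= G p.
  by move=> p; apply: sumr_ge0 => c _; apply: addr_ge0; apply: ler0n.
have S1 : #|S|%:R <= \sum_(p in S) G p.
  rewrite -sum1_card natr_sum; apply: ler_sum => p pS.
  case: (key p pS) => c hc.
  rewrite /G (bigD1 c) //=; apply: (@le_trans _ _ ((`[< F2 p.2 (l1 (p.1, c)) >] : nat)%:R
      + ((`[< F1 p.1 (l2 (p.2, c)) >] : nat)%:R))).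
    by case: hc => hc; rewrite (asboolT hc) /=; rewrite ?lerDl ?lerDr ler0n.
  by rewrite lerDl; apply: sumr_ge0 => c' _; apply: addr_ge0; apply: ler0n.
have S2 : \sum_(p in S) G p <= \sum_p G p.
  rewrite [X in X <= _]big_mkcond /=; apply: ler_sum => p _.
  by case: (p \in S)...
have S3 : \sum_p G p <= d%:R * (n1%:R * (beta * n2%:R) + n2%:R * (beta * n1%:R)).
  rewrite /G exchange_big /=.
  apply: (@le_trans _ _ (\sum_(c < d) (n1%:R * (beta * n2%:R) + n2%:R * (beta * n1%:R)))); last first.
    by rewrite sumr_const card_ord [X in _ <= X]mulr_natl.
  apply: ler_sum => c _; rewrite big_split /=; apply: lerD.
    rewrite -(pair_big xpredT xpredT (fun i j =>
        ((`[< F2 j (l1 (i, c)) >] : nat)%:R : R))) /=.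
    apply: (@le_trans _ _ (\sum_(i < n1) (beta * n2%:R))); last first.
      by rewrite sumr_const card_ord [X in _ <= X]mulr_natl.
    apply: ler_sum => i _; rewrite sum_asbool_card; exact: B2.
  rewrite -(pair_big xpredT xpredT (fun i j =>
        ((`[< F1 i (l2 (j, c)) >] : nat)%:R : R))) /= exchange_big /=.
  apply: (@le_trans _ _ (\sum_(j < n2) (beta * n1%:R))); last first.
    by rewrite sumr_const card_ord [X in _ <= X]mulr_natl.
  apply: ler_sum => j _; rewrite sum_asbool_card; exact: B1.
have E : d%:R * (n1%:R * (beta * n2%:R) + n2%:R * (beta * n1%:R))
    = a * n1%:R * n2%:R / 2.
  rewrite /beta; field; rewrite ?gt_eqF //.
have pos : 0 < a * n1%:R * n2%:R by rewrite !mulr_gt0 // ltr0n.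
move: HS S1 S2 S3; rewrite E; lra.
Qed.
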